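(* Consider the weighted median search process described in the context. Let $I=\{\tau+1,\dots,\tau+k\}$ be an interval of $k$ consecutive steps such that some vertex $x$ is heavy with respect to the weights $\omega_{t-1}$ at the time of each query $t\in I$, and $x$ remains heavy with respect to $\omega_{\tau+k}$ after the last query in $I$. Then, for any sequence of answers, $$\omega_{\tau+k}(V\setminus\{x\})\le \frac{\omega_\tau(V)}{2^k}.$$
   Context: $G=(V,E)$ is a connected undirected unweighted graph, $0<p<\frac12$, $d(u,v)$ is the graph distance. Positive weights $\omega_t(v)$ are maintained, with $\omega(U)=\sum_{u\in U}\omega(u)$; a vertex $v$ is heavy (w.r.t. $\omega$) if $\omega(v)/\omega(V)\ge\frac12$. A median w.r.t. $\omega$ is a vertex $q$ minimizing $\sum_{u\in V}d(u,q)\omega(u)$. In step $t$ the process queries a median $q$ w.r.t. $\omega_{t-1}$, where a heavy vertex is chosen whenever one exists (a heavy vertex is always a median). The answer is either ''yes'' or a neighbor $u$ of $q$ (a ''no-answer''). A vertex $v$ is compatible with the answer if: for a yes-answer, $v=q$; for a no-answer $u$ with $q$ not heavy, $u$ lies on a shortest $q$–$v$ path; for a no-answer with $q$ heavy, $v\neq q$. Bayesian update: $\omega_t(v)=(1-p)\omega_{t-1}(v)$ if $v$ is compatible and $\omega_t(v)=p\,\omega_{t-1}(v)$ otherwise. *)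

(* Defs.v *)
From mathcomp Require Import all_boot all_order all_algebra.
Set Implicit Arguments. Unset Strict Implicit. Unset Printing Implicit Defensive.
Import Order.TTheory GRing.Theory Num.Theory.
Local Open Scope ring_scope.

Fixpoint walkn (T : finType) (e : rel T) (n : nat) (u v : T) : bool :=
  match n with
  | 0 => u == v
  | n'.+1 => [exists w, e u w && walkn e n' w v]
  end.

(* Graph distance: least n with a walk of length n from u to v.
   (In a connected graph it is < #|T|; the search is bounded by #|T|.) *)
Definition dist (T : finType) (e : rel T) (u v : T) : nat :=
  find (fun n => walkn e n u v) (iota 0 #|T|).

Section Process.
Variables (R : realFieldType) (T : finType).

Definition wtot (w : T -> R) : R := \sum_(v : T) w v.

Definition heavy (w : T -> R) (v : T) : bool := w v / wtot w >= 1 / 2.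

Definition is_median (e : rel T) (w : T -> R) (q : T) : bool :=
  [forall y : T, \sum_(u : T) (dist e u q)%:R * w u
                 <= \sum_(u : T) (dist e u y)%:R * w u].

(* Answers: None = "yes", Some u = no-answer pointing to neighbor u. *)
Definition compatible (e : rel T) (w : T -> R) (q : T) (a : option T) (v : T)
  : bool :=
  match a with
  | None => v == q
  | Some u => if heavy w q then v != q
              else dist e q u + dist e u v == dist e q v
  end.

End Process.

(* Main.v *)
Require Import Defs.
From mathcomp Require Import all_boot all_order all_algebra.
From mathcomp Require Import ring lra.
Import Order.TTheory GRing.Theory Num.Theory.
Local Open Scope ring_scope.

Section Aux.
Variables (R : realFieldType) (T : finType).

Definition Bw (x : T) (w : T -> R) : R := \sum_(v | v != x) w v.

Lemma wtot_split (w : T -> R) x : wtot w = w x + Bw x w.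
Proof. by rewrite /wtot (bigD1 x). Qed.

Lemma heavy2 (w : T -> R) v : 0 < wtot w -> heavy w v -> wtot w <= 2 * w v.
Proof.
move=> W0; rewrite /heavy ler_pdivlMr // => H.
have : 1 / 2 * wtot w <= w v by [].
lra.
Qed.

Lemma step (w0 w1 : T -> R) (x q : T) (p : R) (b : bool) :
  0 < p -> p < 1 / 2 -> (forall v, 0 <= w0 v) ->
  wtot w0 <= 2 * w0 x -> wtot w0 <= 2 * w0 q ->
  (forall v, w1 v = (if (if b then v == q else v != q) then 1 - p else p) * w0 v) ->
  w1 x * Bw x w1 <= p * (1 - p) * (w0 x * Bw x w0).
Proof.
move=> p0 p12 pos hx hq E.
have A0 := pos x.
have B0 : 0 <= Bw x w0 by apply: sumr_ge0.
have [qx|qx] := eqVneq q x.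
  subst q.
  case: b E => E.
  - have -> : Bw x w1 = p * Bw x w0.
      rewrite /Bw mulr_sumr; apply: eq_bigr => v /negbTE vx; by rewrite E vx.
    rewrite E eqxx; nra.
  - have -> : Bw x w1 = (1 - p) * Bw x w0.
      rewrite /Bw mulr_sumr; apply: eq_bigr => v vx; by rewrite E vx.
    rewrite E eqxx /=; nra.
have xq : x != q by rewrite eq_sym.
have split w : Bw x w = w q + \sum_(v | (v != x) && (v != q)) w v.
  by rewrite /Bw (bigD1 q).
have r0ge : 0 <= \sum_(v | (v != x) && (v != q)) w0 v by apply: sumr_ge0.
have r0 : \sum_(v | (v != x) && (v != q)) w0 v = 0.
  move: hx hq; rewrite (wtot_split _ x) !split => hx hq; lra.
have r1 : \sum_(v | (v != x) && (v != q)) w1 v = 0.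
  rewrite (eq_bigr (fun v => (if b then p else 1 - p) * w0 v)); last first.
    move=> v /andP [_ vq]; rewrite E; move: E; case: b => _ /=; by rewrite ?(negbTE vq) ?vq.
  by rewrite -mulr_sumr r0 mulr0.
rewrite !split r0 r1 !addr0 !E eqxx (negbTE xq) /=.
have Q0 := pos q.
move: E; case: b => _ /=; nra.
Qed.

End Aux.
Arguments Bw {R T}.
Arguments wtot_split {R T}.
Arguments heavy2 {R T w v}.
Arguments step {R T}.

(* w t = omega_t; q t = vertex queried in step t (t >= 1, using omega_(t-1));
   a t = answer in step t. *)
Theorem lemma4 (R : realFieldType) (T : finType) (e : rel T) (p : R)
    (w : nat -> T -> R) (q : nat -> T) (a : nat -> option T)
    (tau k : nat) (x : T) :
  symmetric e -> irreflexive e -> (forall u v, connect e u v) ->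
  0 < p -> p < 1 / 2 ->
  (forall v, 0 < w 0%N v) ->
  (forall t, is_median e (w t) (q t.+1)) ->
  (forall t, (exists v, heavy (w t) v) -> heavy (w t) (q t.+1)) ->
  (forall t u, a t.+1 = Some u -> e (q t.+1) u) ->
  (forall t v, w t.+1 v =
     (if compatible e (w t) (q t.+1) (a t.+1) v then 1 - p else p) * w t v) ->
  (forall t, (tau < t <= tau + k)%N -> heavy (w t.-1) x) ->
  heavy (w (tau + k)%N) x ->
  \sum_(v | v != x) w (tau + k)%N v <= wtot (w tau) / 2 ^+ k.
Proof.
move=> _ _ _ p0 p12 w0 _ hq _ E hI hend.
have pos : forall t v, 0 < w t v.
  elim=> [|t IH] v; first exact: w0.
  rewrite E; apply: mulr_gt0 => //; case: ifP => _; lra.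
have Wpos : forall t, 0 < wtot (w t).
  move=> t; rewrite (wtot_split _ x); apply: ltr_wpDr; last exact: pos.
  by apply: sumr_ge0 => v _; apply: ltW.
have inv : forall j, (j <= k)%N ->
  (2 ^+ j) ^+ 2 * (w (tau + j)%N x * Bw x (w (tau + j)%N))
    <= w tau x * Bw x (w tau).
  elim=> [|j IH] jk; first by rewrite addn0 expr0 expr1n mul1r.
  have IH' := IH (ltnW jk).
  have hx : heavy (w (tau + j)%N) x.
    have := hI (tau + j.+1)%N; rewrite addnS /=; apply; apply/andP; split; [by rewrite ltnS leq_addr | by rewrite -addnS leq_add2l].
  have hqq : heavy (w (tau + j)%N) (q (tau + j).+1) by apply: hq; exists x.
  set t := (tau + j)%N in hx hqq IH'.
  have st := step (w t) (w t.+1) x (q t.+1) p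
    (if a t.+1 is Some _ then false else true) p0 p12 (fun v => ltW (pos t v))
    (heavy2 (Wpos t) hx) (heavy2 (Wpos t) hqq).
  have st' : w t.+1 x * Bw x (w t.+1) <= p * (1 - p) * (w t x * Bw x (w t)).
    apply: st => v; rewrite E /compatible; case: (a t.+1) => [u|] //.
    by rewrite hqq.
  rewrite addnS -/t.
  have AB0 : 0 <= w t x * Bw x (w t).
    apply: mulr_ge0; first exact: ltW.
    by apply: sumr_ge0 => v _; apply: ltW.
  have X0 : 0 < (2 ^+ j) ^+ 2 :> R by apply: exprn_gt0; apply: exprn_gt0.
  have AB1 : 0 <= w t.+1 x * Bw x (w t.+1).
    apply: mulr_ge0; first exact: ltW.
    by apply: sumr_ge0 => v _; apply: ltW.
  have -> : (2 ^+ j.+1) ^+ 2 = 4 * (2 ^+ j) ^+ 2 :> R.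
    by rewrite [2 ^+ j.+1]exprS; ring.
  set X := (2 ^+ j) ^+ 2 in X0 IH' *.
  set P := w t.+1 x * Bw x (w t.+1) in st' AB1 *.
  set Q := w t x * Bw x (w t) in st' AB0 IH' *.
  have r : p * (1 - p) <= 1 / 4 by nra.
  have := ler_wpM2r AB0 r.
  move=> r'; have : P <= Q / 4 by lra.
  nra.
have := inv k (leqnn k).
have hx := heavy2 (Wpos _) hend.
rewrite (wtot_split _ x) in hx.
rewrite (wtot_split (w tau) x).
have A0 := ltW (pos tau x).
have B0 : 0 <= Bw x (w tau) by apply: sumr_ge0 => v _; apply: ltW.
have B1 : 0 <= Bw x (w (tau + k)%N) by apply: sumr_ge0 => v _; apply: ltW.
have K0 : 0 < 2 ^+ k :> R by apply: exprn_gt0.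
rewrite ler_pdivlMr // -/(Bw x (w (tau + k)%N)).
move=> H.
set A := w tau x in H A0 *; set B := Bw x (w tau) in H B0 *.
set A' := w (tau + k)%N x in H hx *; set B' := Bw x (w (tau + k)%N) in H hx B1 *.
set K := 2 ^+ k in H K0 *.
have BA : B' <= A' by lra.
have KB : 0 <= K ^+ 2 * B' by apply: mulr_ge0 => //; apply: exprn_ge0; apply: ltW.
have H1 := ler_wpM2l KB BA.
have H2 : (K * B') ^+ 2 <= (A + B) ^+ 2.
  have -> : (K * B') ^+ 2 = K ^+ 2 * B' * B' by ring.
  have -> : (A + B) ^+ 2 = A * B + (A ^+ 2 + B ^+ 2 + A * B) by ring.
  have : 0 <= A ^+ 2 + B ^+ 2 + A * B.
    by apply: addr_ge0; [apply: addr_ge0; apply: sqr_ge0 | apply: mulr_ge0].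
  move: H1 H; rewrite !mulrA; lra.
rewrite -ler_sqr ?nnegrE //; nra.
Qed.
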